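(* Let $O$ be the partial P-matroid USO of a P-matroid extension on $E_{2n}\cup\{q\}$, and let $F$ be the set of maximal unoriented faces, i.e., the faces $f_v=\{w: w_i=v_i \text{ for all } i \text{ with } O(v)_i\neq0\}$, $v\in\{0,1\}^n$ (these are pairwise vertex-disjoint or equal, and their half-edges are exactly the unoriented half-edges of $O$). For each $f\in F$ choose an arbitrary unique sink orientation $U_f$ of $f$ (viewed as a cube of dimension equal to the number of dimensions spanned by $f$). Let $O'(v)_i=U_f(v)_i$ if $v\in f\in F$ and $i$ is spanned by $f$, and $O'(v)_i=O(v)_i$ otherwise. Then $O'$ is a unique sink orientation of $Q_n$.
   Context: Oriented matroids are given by circuits $X\in\{-,0,+\}^E$ with support $\underline X$; bases are inclusion-maximal subsets containing no circuit support; for a basis $B$ and $e\notin B$ the fundamental circuit $C(B,e)$ is the unique circuit $X$ with $X_e=+$, $\underline X\subseteq B\cup\{e\}$. $S=\{s_1,\dots,s_n\}$, $T=\{t_1,\dots,t_n\}$, $E_{2n}=S\cup T$, $q\notin E_{2n}$; complementary sets contain no pair $\{s_i,t_i\}$; a circuit is sign-reversing if $X_{s_i}=-X_{t_i}$ whenever $\{s_i,t_i\}\subseteq\underline X$; a P-matroid is an oriented matroid on $E_{2n}$ in which $S$ is a basis and no circuit is sign-reversing; a P-matroid extension is an oriented matroid on $E_{2n}\cup\{q\}$ whose circuits with $X_q=0$ restrict to exactly the circuits of a P-matroid. In a P-matroid extension every complementary $n$-set is a basis. A face of $Q_n$ is a set $\{w\in\{0,1\}^n: w_j=u_j\ \forall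 j\notin I\}$, spanning the dimensions in $I$. For $v\in\{0,1\}^n$, $B(v)=\{s_i:v_i=0\}\cup\{t_i:v_i=1\}$. The partial P-matroid USO is $O:\{0,1\}^n\to\{-,0,+\}^n$ with, for $C=C(B(v),q)$ and $e=s_i$ if $v_i=0$, $e=t_i$ if $v_i=1$: $O(v)_i=+$ if $C_e=-$, $-$ if $C_e=+$, $0$ if $C_e=0$ ($+$ outgoing, $-$ incoming, $0$ unoriented). A unique sink orientation of a cube is an assignment of $\pm$ to every half-edge such that every non-empty face has exactly one vertex whose half-edges in all dimensions spanned by the face are incoming. *)

(* Defs.v *)
From mathcomp Require Import all_boot.
Set Implicit Arguments. Unset Strict Implicit. Unset Printing Implicit Defensive.

(* Signs: Some true = +, Some false = -, None = 0. *)
Definition sign := option bool.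
Definition sopp (s : sign) : sign := omap negb s.

Section OM.
Variable E : finType.
Definition svec := {ffun E -> sign}.

Definition negv (X : svec) : svec := [ffun e => sopp (X e)].
Definition supp (X : svec) : {set E} := [set e | X e != None].

Definition is_OM (C : {set svec}) : Prop :=
  [/\ (forall X, X \in C -> supp X != set0),
      (forall X, X \in C -> negv X \in C),
      (forall X Y, X \in C -> Y \in C -> supp X \subset supp Y ->
                   X = Y \/ X = negv Y)
    & (forall X Y e, X \in C -> Y \in C -> X <> negv Y ->
         X e = Some true -> Y e = Some false ->
         exists2 Z, Z \in C &
           [/\ Z e = None,
               (forall f, Z f = Some true -> X f = Some true \/ Y f = Some true)
             & (forall f, Z f = Some false -> X f = Some false \/ Y f = Some false)])].

Definition indep (C : {set svec}) (B : {set E}) : bool :=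
  [forall X in C, ~~ (supp X \subset B)].

Definition is_basis (C : {set svec}) (B : {set E}) : bool :=
  indep C B && [forall B' : {set E}, (B \proper B') ==> ~~ indep C B'].

(* Fundamental circuit C(B,e): the (unique) circuit X with X_e = + and
   supp X included in B + e (zero vector if none exists). *)
Definition fund_circ (C : {set svec}) (B : {set E}) (e : E) : svec :=
  odflt [ffun => None]
    [pick X in C | (X e == Some true) && (supp X \subset e |: B)].
End OM.

(* E_{2n}: (false,i) = s_i, (true,i) = t_i.  E_{2n} + {q}: q = None. *)
Definition E2 (n : nat) := (bool * 'I_n)%type.
Definition Eq (n : nat) := option (E2 n).

Definition Sset (n : nat) : {set E2 n} := [set (false, i) | i : 'I_n].

Definition sign_reversing (n : nat) (X : svec (E2 n)) : Prop :=
  forall i : 'I_n, (false, i) \in supp X -> (true, i) \in supp X ->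
    X (false, i) = sopp (X (true, i)).

Definition is_P_matroid (n : nat) (C : {set svec (E2 n)}) : Prop :=
  [/\ is_OM C, is_basis C (Sset n) & forall X, X \in C -> ~ sign_reversing X].

Definition deletion_q (n : nat) (C : {set svec (Eq n)}) : {set svec (E2 n)} :=
  [set [ffun e : E2 n => (X : svec (Eq n)) (Some e)] | X in C & (X : svec (Eq n)) None == None].

Definition is_P_matroid_extension (n : nat) (C : {set svec (Eq n)}) : Prop :=
  is_OM C /\ is_P_matroid (deletion_q C).

Definition vertex (n : nat) := {ffun 'I_n -> bool}.

Definition Bv (n : nat) (v : vertex n) : {set Eq n} :=
  [set Some (v i, i) | i : 'I_n].

(* Partial P-matroid USO: Some true = outgoing, Some false = incoming,
   None = unoriented. *)
Definition PUSO (n : nat) (C : {set svec (Eq n)}) (v : vertex n) (i : 'I_n) : sign :=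
  sopp (fund_circ C (Bv v) None (Some (v i, i))).

Definition face (n : nat) (I : {set 'I_n}) (u : vertex n) : {set vertex n} :=
  [set w : vertex n | [forall j, (j \notin I) ==> (w j == u j)]].

(* A (total) orientation: ori v i = true means outgoing, false incoming. *)
Definition sinks_in (n : nat) (ori : vertex n -> 'I_n -> bool)
  (J : {set 'I_n}) (w : vertex n) : {set vertex n} :=
  [set x in face J w | [forall i in J, ~~ ori x i]].

Definition is_USO_on (n : nat) (I : {set 'I_n}) (u : vertex n)
  (ori : vertex n -> 'I_n -> bool) : Prop :=
  forall (J : {set 'I_n}) (w : vertex n), J \subset I -> w \in face I u ->
    #|sinks_in ori J w| = 1.

Definition is_USO (n : nat) (ori : vertex n -> 'I_n -> bool) : Prop :=
  forall (J : {set 'I_n}) (w : vertex n), #|sinks_in ori J w| = 1.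

Definition unor_dims (n : nat) (C : {set svec (Eq n)}) (v : vertex n) : {set 'I_n} :=
  [set i | PUSO C v i == None].
Definition max_unor_face (n : nat) (C : {set svec (Eq n)}) (v : vertex n) : {set vertex n} :=
  face (unor_dims C v) v.

Definition completed (n : nat) (C : {set svec (Eq n)})
  (U : {set vertex n} -> vertex n -> 'I_n -> bool) (v : vertex n) (i : 'I_n) : bool :=
  match PUSO C v i with
  | Some b => b
  | None => U (max_unor_face C v) v i
  end.

(* Main.v *)
Require Import Defs.
From mathcomp Require Import all_boot.
Set Implicit Arguments. Unset Strict Implicit. Unset Printing Implicit Defensive.

Lemma faceP (n : nat) (I : {set 'I_n}) (u x : vertex n) :
  reflect (forall j, j \notin I -> x j = u j) (x \in face I u).
Proof.
rewrite inE; apply: (iffP forallP) => H j.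
  by move=> hj; apply/eqP; move: (H j); rewrite hj.
by apply/implyP => hj; rewrite H.
Qed.

Lemma sinksP (n : nat) ori (J : {set 'I_n}) (w x : vertex n) :
  (x \in sinks_in ori J w) = (x \in face J w) && [forall i in J, ~~ ori x i].
Proof. by rewrite /sinks_in inE. Qed.

Definition flipv (n : nat) (K : {set 'I_n}) (w : vertex n) : vertex n :=
  [ffun i => if i \in K then ~~ w i else w i].

Lemma inj_USO (n : nat) (ori : vertex n -> 'I_n -> bool) :
  (forall v w : vertex n, v != w -> exists i, v i != w i /\ ori v i != ori w i) -> is_USO ori.
Proof.
move=> Hd J w.
set A := face J w.
pose phi x := [set i in J | ori x i].
have phi_inj : {in A &, injective phi}.
  move=> x y hx hy /setP hxy; apply/eqP; apply/negPn/negP => nxy.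
  have [i [di doi]] := Hd _ _ nxy.
  have iJ : i \in J.
    apply/negPn/negP => niJ; move/faceP: hx => hx; move/faceP: hy => hy.
    by move: di; rewrite hx // hy // eqxx.
  by move: (hxy i); rewrite !inE iJ /= => e; rewrite e eqxx in doi.
have sub : phi @: A \subset powerset J.
  apply/subsetP => _ /imsetP [x _ ->]; rewrite inE; apply/subsetP => i.
  by rewrite inE => /andP [].
have le2 : #|powerset J| <= #|A|.
  have fi : injective (fun K => flipv K w).
    move=> K K' /ffunP e; apply/setP => i; move: (e i); rewrite !ffunE.
    by case: (i \in K); case: (i \in K'); case: (w i).
  rewrite -(card_imset _ fi); apply: subset_leq_card; apply/subsetP => _ /imsetP [K hK ->].
  apply/faceP => j hj; rewrite ffunE; move: hK; rewrite inE => /subsetP /(_ j) h.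
  by case: ifP => // /h; rewrite (negbTE hj).
have eqp : phi @: A = powerset J.
  by apply/eqP; rewrite eqEcard sub /= (card_in_imset phi_inj).
have : set0 \in phi @: A by rewrite eqp inE sub0set.
case/imsetP => x0 hx0 e0.
have -> : sinks_in ori J w = [set x0].
  apply/setP => x; rewrite sinksP in_set1.
  apply/andP/eqP => [[hx /forallP hs]| ->].
  - apply: phi_inj => //; rewrite -e0; apply/setP => i; rewrite !inE.
    by move: (hs i); case: (i \in J) => //= /negbTE.
  - split => //; apply/forallP => i; apply/implyP => iJ.
    by move/setP: e0 => /(_ i); rewrite !inE iJ /= => <-.
by rewrite cards1.
Qed.

Definition flipo (n : nat) (K : {set 'I_n}) (ori : vertex n -> 'I_n -> bool) v i :=
  ori v i (+) (i \in K).

Lemma USO_on_ext (n : nat) (I : {set 'I_n}) u (o1 o2 : vertex n -> 'I_n -> bool) :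
  (forall v i, o1 v i = o2 v i) -> is_USO_on I u o1 -> is_USO_on I u o2.
Proof.
move=> e H J w sJ hw; rewrite -(H J w sJ hw); apply: eq_card => x.
rewrite !sinksP; congr (_ && _).
by apply: eq_forallb => i; rewrite e.
Qed.

Lemma card_part (T : finType) (A : {set T}) (p : pred T) :
  #|[set x in A | p x]| + #|[set x in A | ~~ p x]| = #|A|.
Proof.
rewrite -(cardsID [set x | p x] A); congr (_ + _); apply: eq_card => x;
  by rewrite !inE // andbC.
Qed.

Lemma flip1 (n : nat) (I : {set 'I_n}) u ori k :
  is_USO_on I u ori -> is_USO_on I u (fun v i => ori v i (+) (i == k)).
Proof.
move=> H J w sJ hw.
case kJ: (k \in J); last first.
  rewrite -(H J w sJ hw); apply: eq_card => x; rewrite !sinksP; congr (_ && _).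
  apply: eq_forallb => i; case iJ: (i \in J) => //=.
  have : i != k by apply: contraTneq iJ => ->; rewrite kJ.
  by move/negbTE => ->; rewrite addbF.
set J' := J :\ k.
set w' := flipv [set k] w.
have sJ' : J' \subset I by apply: subset_trans sJ; apply: subD1set.
have hw' : w' \in face I u.
  apply/faceP => j hj; rewrite ffunE inE.
  case: eqP => [ej|_]; last by move/faceP: hw; apply.
  by move: hj; rewrite ej (subsetP sJ _ kJ).
set S' := [set x in face J w | [forall i in J', ~~ ori x i]].
have fJ' : forall x, (x \in face J' w) = (x \in face J w) && (x k == w k).
  move=> x; apply/faceP/andP => [h|[/faceP h /eqP h2] j].
    split; first by apply/faceP => j hj; apply: h; rewrite !inE negb_and (negbTE hj) orbT.
    by rewrite h // !inE eqxx.
  rewrite !inE negb_and negbK; case: (eqVneq j k) => [->|_] //= /h //.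
have fJ'' : forall x, (x \in face J' w') = (x \in face J w) && (x k != w k).
  move=> x; apply/faceP/andP => [h|[/faceP h h2] j].
    split; last by rewrite h ?ffunE ?inE ?eqxx ?(negbTE (negbNE _)) //=; case: (w k).
    apply/faceP => j hj; rewrite h; last by rewrite !inE negb_and (negbTE hj) orbT.
    rewrite ffunE inE; case: eqP => // ej; by move: hj; rewrite ej kJ.
  rewrite inE negb_and negbK ffunE inE; case: eqP => [->|nj] /=.
    by move=> _; move: h2; case: (x k); case: (w k).
  by move/h.
have c1 : #|[set x in S' | x k == w k]| = 1.
  rewrite -(H J' w sJ' hw); apply: eq_card => x.
  by rewrite sinksP fJ' !inE -!andbA; congr (_ && _); rewrite andbC.
have c2 : #|[set x in S' | ~~ (x k == w k)]| = 1.
  rewrite -(H J' w' sJ' hw'); apply: eq_card => x.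
  by rewrite sinksP fJ'' !inE -!andbA; congr (_ && _); rewrite andbC.
have hS : #|S'| = 2 by rewrite -(card_part S' (fun x => x k == w k)) c1 c2.
have fa : forall (P : 'I_n -> bool), [forall i in J, P i] = [forall i in J', P i] && P k.
  move=> P; apply/forallP/andP => [h|[/forallP h hk] i].
    split; last by move: (h k); rewrite kJ.
    by apply/forallP => i; apply/implyP => /setD1P [_ iJ]; move: (h i); rewrite iJ.
  apply/implyP => iJ; case: (eqVneq i k) => [->//|nik].
  by move: (h i); rewrite !inE nik iJ.
have c3 : #|[set x in S' | ~~ ori x k]| = 1.
  rewrite -(H J w sJ hw); apply: eq_card => x.
  by rewrite sinksP !inE fa andbA.
have c4 : sinks_in (fun v i => ori v i (+) (i == k)) J w = [set x in S' | ori x k].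
  apply/setP => x; rewrite sinksP !inE fa eqxx addbT negbK andbA; congr (_ && _ && _).
  apply: eq_forallb => i; case: (boolP (i \in J')) => //= /setD1P [nik _].
  by rewrite (negbTE nik) addbF.
have := card_part S' (fun x => ori x k); rewrite hS c3 -c4.
by rewrite addn1 => -[].
Qed.

Lemma flipK (n : nat) (I : {set 'I_n}) u ori K :
  is_USO_on I u ori -> is_USO_on I u (flipo K ori).
Proof.
move=> H; move: {2}#|K| (erefl #|K|) => m; elim: m K => [|m IH] K hK.
  move/eqP: hK; rewrite cards_eq0 => /eqP ->.
  by apply: USO_on_ext H => v i; rewrite /flipo inE addbF.
have : K != set0 by rewrite -cards_eq0 hK.
case/set0Pn => k kK.
have hK' : #|K :\ k| = m by move: hK; rewrite (cardsD1 k K) kK add1n => [[]].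
apply: (USO_on_ext (o1 := fun v i => flipo (K :\ k) ori v i (+) (i == k))).
  move=> v i; rewrite /flipo -addbA; congr (_ (+) _); rewrite !inE.
  by case: (eqVneq i k) => [->|nik] /=; rewrite ?kK ?eqxx ?addbF.
exact: flip1 (IH _ hK').
Qed.

Lemma USO_on_inj (n : nat) (I : {set 'I_n}) u ori (x y : vertex n) :
  is_USO_on I u ori -> x \in face I u -> y \in face I u -> x != y ->
  exists i, x i != y i /\ ori x i != ori y i.
Proof.
move=> H hx hy nxy.
case: (pickP (fun i => (x i != y i) && (ori x i != ori y i))) => [i /andP [a b]|hn].
  by exists i.
set J := [set i | x i != y i].
set K := [set i in J | ori x i].
have H' := flipK K H.
have hK : forall i, i \in J -> (i \in K) = ori x i by move=> i iJ; rewrite /K in_set iJ.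
have sJ : J \subset I.
  apply/subsetP => i; rewrite inE; apply: contraR => niI.
  by move/faceP: hx => /(_ i niI) ->; move/faceP: hy => /(_ i niI) ->.
have hs : [set x; y] \subset sinks_in (flipo K ori) J x.
  apply/subsetP => z; rewrite in_set2 => /orP [] /eqP ->; rewrite sinksP.
    apply/andP; split; first by apply/faceP.
    by apply/forallP => i; apply/implyP => iJ; rewrite /flipo hK // addbb.
  apply/andP; split.
    by apply/faceP => j; rewrite inE negbK => /eqP.
  apply/forallP => i; apply/implyP => iJ; rewrite /flipo hK //.
  move: (hn i); move: iJ; rewrite inE => -> /=; move/negbFE/eqP => ->.
  by rewrite addbb.
have := subset_leq_card hs; rewrite cards2 nxy (H' J x sJ hx).
by [].
Qed.

Lemma sopp_None (s : sign) : (sopp s == None) = (s == None).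
Proof. by case: s. Qed.

Lemma soppK (s : sign) : sopp (sopp s) = s.
Proof. by case: s => [[]|]. Qed.

Lemma negvE (E : finType) (X : svec E) e : negv X e = sopp (X e).
Proof. by rewrite ffunE. Qed.

Lemma negvK (E : finType) (X : svec E) : negv (negv X) = X.
Proof. by apply/ffunP => e; rewrite !negvE soppK. Qed.

Lemma mem_Bv (n : nat) (v : vertex n) b i : (Some (b, i) \in Bv v) = (b == v i).
Proof.
apply/imsetP/eqP => [[j _ [-> ->]] // | ->]; by exists i.
Qed.

Lemma None_Bv (n : nat) (v : vertex n) : (None \in Bv v) = false.
Proof. by apply/imsetP => [[j _]]. Qed.

Definition restr (n : nat) (X : svec (Eq n)) : svec (E2 n) := [ffun e => X (Some e)].

Lemma del_mem (n : nat) (C : {set svec (Eq n)}) X :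
  X \in C -> X None = None -> restr X \in deletion_q C.
Proof. by move=> hX hN; apply/imsetP; exists X => //; rewrite inE hX hN eqxx. Qed.

Lemma indepB (n : nat) (C : {set svec (Eq n)}) (v : vertex n) X :
  is_P_matroid (deletion_q C) -> X \in C -> X None = None ->
  (forall e, X e != None -> e \in Bv v) -> False.
Proof.
case=> _ _ Hns hX hN hs; apply: (Hns _ (del_mem hX hN)) => i.
rewrite !inE !ffunE => /hs h1 /hs h2; exfalso.
by move: h1 h2; rewrite !mem_Bv => /eqP <-.
Qed.

Lemma sgn_choose (n : nat) (C : {set svec (Eq n)}) X e s :
  is_OM C -> X \in C -> X e != None ->
  exists2 X', X' \in C & X' e = Some s /\ forall g, (X' g == None) = (X g == None).
Proof.
case=> _ Hneg _ _ hX; case hXe: (X e) => [a|] // _.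
case: (eqVneq a s) => [eas|nas].
  by exists X => //; rewrite hXe eas.
exists (negv X); first exact: Hneg.
split; last by move=> g; rewrite negvE sopp_None.
by rewrite negvE hXe /=; move: nas; clear hXe; case: a; case: s.
Qed.

Lemma elim_any (n : nat) (C : {set svec (Eq n)}) X Y e :
  is_OM C -> X \in C -> Y \in C -> X e != None -> Y e != None ->
  (exists f, (X f == None) != (Y f == None)) ->
  exists2 Z, Z \in C & Z e = None /\ (forall g, Z g != None -> (X g != None) || (Y g != None)).
Proof.
move=> HOM hX hY hXe hYe [f hf].
have [X' hX' [hX'e hX'g]] := sgn_choose true HOM hX hXe.
have [Y' hY' [hY'e hY'g]] := sgn_choose false HOM hY hYe.
case: HOM => _ _ _ Hel.
have nX : X' <> negv Y'.
  move=> eX; move: hf; rewrite -hX'g -hY'g eX negvE sopp_None.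
  by rewrite eqxx.
have [Z hZ [hZe hZp hZn]] := Hel X' Y' e hX' hY' nX hX'e hY'e.
exists Z => //; split => // g.
case hZg: (Z g) => [[]|] // _.
  by case: (hZp g hZg) => h; rewrite -hX'g -hY'g h ?orbT.
by case: (hZn g hZg) => h; rewrite -hX'g -hY'g h ?orbT.
Qed.

Definition fl (n : nat) (i : 'I_n) (v : vertex n) : vertex n :=
  [ffun j => if j == i then ~~ v j else v j].

Lemma Bv_fl (n : nat) (v : vertex n) i g :
  g \in Bv v -> g != Some (v i, i) -> g \in Bv (fl i v).
Proof.
case: g => [[b k]|]; rewrite ?None_Bv // !mem_Bv ffunE.
case: (eqVneq k i) => [->|nki] //= /eqP ->; by rewrite eqxx.
Qed.

Lemma Bv_fl2 (n : nat) (v : vertex n) i : Some (~~ v i, i) \in Bv (fl i v).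
Proof. by rewrite mem_Bv ffunE eqxx. Qed.

Lemma flK (n : nat) (i : 'I_n) (v : vertex n) : fl i (fl i v) = v.
Proof. by apply/ffunP => j; rewrite !ffunE; case: eqP => // ->; rewrite ?eqxx negbK. Qed.

Definition span (n : nat) (C : {set svec (Eq n)}) (v : vertex n) :=
  forall j, exists2 D, D \in C & D None = None /\
    (forall e, D e != None -> (e == Some (~~ v j, j)) || (e \in Bv v)).

Lemma span_nz (n : nat) (C : {set svec (Eq n)}) (v : vertex n) j D :
  is_P_matroid (deletion_q C) -> D \in C -> D None = None ->
  (forall e, D e != None -> (e == Some (~~ v j, j)) || (e \in Bv v)) ->
  D (Some (~~ v j, j)) != None /\ D (Some (v j, j)) != None.
Proof.
move=> HP hD hN hs; split; apply/negP => /eqP h.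
  apply: (indepB HP hD hN) => e he.
  case/orP: (hs e he) => [/eqP ee|eB]; [by rewrite ee h in he | exact: eB].
apply: (indepB (v := fl j v) HP hD hN) => e he.
case/orP: (hs e he) => [/eqP ->|eB]; first exact: Bv_fl2.
apply: Bv_fl eB _; apply: contraNneq he => ->; by rewrite h.
Qed.

Lemma span0 (n : nat) (C : {set svec (Eq n)}) (v : vertex n) :
  is_P_matroid (deletion_q C) -> (forall i, v i = false) -> span C v.
Proof.
move=> HP hv j; case: HP => _ /andP [_ /forallP /(_ ((true, j) |: Sset n)) H] _; move: H.
have pr : Sset n \proper (true, j) |: Sset n.
  rewrite properE subsetUr /=; apply/negP => /subsetP /(_ (true, j)).
  by rewrite !inE eqxx => /(_ isT) /imsetP [i _].
rewrite pr /= => /forallPn [Y]; rewrite negb_imply negbK => /andP [hY hs].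
case/imsetP: hY => X; rewrite inE => /andP [hX /eqP hN] eY.
exists X => //; split => // e he.
case: e he => [e|]; last by rewrite hN.
move=> he; have : e \in supp Y by rewrite eY inE ffunE.
move/(subsetP hs); rewrite !inE => /orP [/eqP ->|/imsetP [i _ ->]].
  by rewrite hv eqxx.
by rewrite mem_Bv !hv orbT.
Qed.

Lemma span_fl (n : nat) (C : {set svec (Eq n)}) (v : vertex n) i :
  is_OM C -> is_P_matroid (deletion_q C) -> span C v -> span C (fl i v).
Proof.
move=> HOM HP Hs j.
have [Di hDi [hDiN hDis]] := Hs i.
have [nz1 nz2] := span_nz HP hDi hDiN hDis.
have hfli : fl i v i = ~~ v i by rewrite ffunE eqxx.
case: (eqVneq j i) => [->|nji].
  exists Di => //; split => // e he; rewrite hfli negbK.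
  case/orP: (hDis e he) => [/eqP ->|eB]; first by rewrite Bv_fl2 orbT.
  case: (eqVneq e (Some (v i, i))) => [->//|ne].
  by rewrite Bv_fl ?orbT.
have hflj : fl i v j = v j by rewrite ffunE (negbTE nji).
have [Dj hDj [hDjN hDjs]] := Hs j.
case: (eqVneq (Dj (Some (v i, i))) None) => [z|nz].
  exists Dj => //; split => // e he; rewrite hflj.
  case/orP: (hDjs e he) => [->//|eB].
  rewrite Bv_fl ?orbT //; apply: contraNneq he => ->; by rewrite z.
have hz : Dj (Some (~~ v i, i)) == None.
  apply/negPn/negP => h.
  case/orP: (hDjs _ h) => [/eqP [] _ eij|]; first by rewrite eij eqxx in nji.
  by rewrite mem_Bv; case: (v i).
have hf : (Dj (Some (~~ v i, i)) == None) != (Di (Some (~~ v i, i)) == None).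
  by rewrite hz (negbTE nz1).
have [Z hZ [hZe hZs]] := elim_any HOM hDj hDi nz nz2 (ex_intro (fun f => _) _ hf).
exists Z => //; split.
  apply/eqP; apply/negPn/negP => h; case/orP: (hZs _ h); by rewrite ?hDjN ?hDiN.
move=> e he; rewrite hflj.
have ne : e != Some (v i, i) by apply: contraNneq he => ->; rewrite hZe.
case/orP: (hZs e he) => h.
  case/orP: (hDjs e h) => [->//|eB]; by rewrite Bv_fl ?orbT.
case/orP: (hDis e h) => [/eqP ->|eB]; first by rewrite Bv_fl2 orbT.
by rewrite Bv_fl ?orbT.
Qed.

Lemma span_all (n : nat) (C : {set svec (Eq n)}) (v : vertex n) :
  is_OM C -> is_P_matroid (deletion_q C) -> span C v.
Proof.
move=> HOM HP; move: {2}#|[set i | v i]| (erefl #|[set i | v i]|) => m.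
elim: m v => [|m IH] v hv.
  apply: span0 => // i; apply/negbTE/negP => vi.
  by move/eqP: hv; rewrite cards_eq0 => /eqP /setP /(_ i); rewrite !inE vi.
have : [set i | v i] != set0 by rewrite -cards_eq0 hv.
case/set0Pn => i; rewrite inE => vi.
rewrite -(flK i v); apply: span_fl => //; apply: IH.
have -> : [set j | fl i v j] = [set j | v j] :\ i.
  apply/setP => j; rewrite !inE ffunE; case: eqP => [->|]; by rewrite ?vi.
by move: hv; rewrite (cardsD1 i) inE vi add1n => -[].
Qed.

Definition circ_at (n : nat) (C : {set svec (Eq n)}) (v : vertex n) :=
  exists2 X, X \in C & X None = Some true /\
    (forall e, X e != None -> (e == None) || (e \in Bv v)).

Lemma circ_step (n : nat) (C : {set svec (Eq n)}) (v : vertex n) i :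
  is_OM C -> is_P_matroid (deletion_q C) -> circ_at C v -> circ_at C (fl i v).
Proof.
move=> HOM HP [X hX [hXN hXs]].
case: (eqVneq (X (Some (v i, i))) None) => [z|nz].
  exists X => //; split => // e he.
  case/orP: (hXs e he) => [->//|eB].
  rewrite Bv_fl ?orbT //; apply: contraNneq he => ->; by rewrite z.
have [Di hDi [hDiN hDis]] := span_all v HOM HP i.
have [nz1 nz2] := span_nz HP hDi hDiN hDis.
have hf : (X None == None) != (Di None == None) by rewrite hXN hDiN.
have [Z hZ [hZe hZs]] := elim_any HOM hX hDi nz nz2 (ex_intro (fun f => _) _ hf).
have hZsub : forall e, Z e != None -> e != None -> e \in Bv (fl i v).
  move=> e he eN.
  have ne : e != Some (v i, i) by apply: contraNneq he => ->; rewrite hZe.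
  case/orP: (hZs e he) => h.
    case/orP: (hXs e h) => [eN'|eB]; first by rewrite eN' in eN.
    by rewrite Bv_fl.
  case/orP: (hDis e h) => [/eqP ->|eB]; first exact: Bv_fl2.
  by rewrite Bv_fl.
have nZ : Z None != None.
  apply/negP => /eqP h; apply: (indepB HP hZ h) => e he; apply: hZsub => //.
  by apply: contraNneq he => ->; rewrite h.
have [Z' hZ' [hZ'N hZ'g]] := sgn_choose true HOM hZ nZ.
exists Z' => //; split => // e; rewrite hZ'g => he.
case: (eqVneq e None) => [->//|eN]; by rewrite hZsub.
Qed.

Lemma circ_all (n : nat) (C : {set svec (Eq n)}) (v w : vertex n) :
  is_OM C -> is_P_matroid (deletion_q C) -> circ_at C v -> circ_at C w.
Proof.
move=> HOM HP; move: {2}#|[set i | v i != w i]| (erefl #|[set i | v i != w i]|) => m.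
elim: m v => [|m IH] v hv hc.
  have -> : w = v; last by [].
  apply/ffunP => i; apply/eqP; apply/negP => /negP h.
  by move/eqP: hv; rewrite cards_eq0 => /eqP /setP /(_ i); rewrite !inE eq_sym h.
have : [set i | v i != w i] != set0 by rewrite -cards_eq0 hv.
case/set0Pn => i; rewrite inE => vi.
apply: (IH (fl i v)); last exact: circ_step.
have -> : [set j | fl i v j != w j] = [set j | v j != w j] :\ i.
  apply/setP => j; rewrite !inE ffunE; case: (eqVneq j i) => [->|nji] //=.
  by move: vi; case: (v i); case: (w i).
by move: hv; rewrite (cardsD1 i) inE vi add1n => -[].
Qed.

Lemma fund_spec (n : nat) (C : {set svec (Eq n)}) (v : vertex n) :
  let X := fund_circ C (Bv v) None in
  (forall e, X e != None -> (e == None) || (e \in Bv v)) /\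
  ((X \in C /\ X None = Some true) \/ (X = [ffun => None] /\ ~ circ_at C v)).
Proof.
rewrite /fund_circ; case: pickP => [X /andP [hX /andP [/eqP h1 h2]] | H] /=.
  split; last by left.
  by move=> e he; rewrite -in_setU1; apply: (subsetP h2); rewrite inE.
split; first by move=> e; rewrite ffunE.
right; split => // [[X hX [h1 h2]]].
have hs : supp X \subset None |: Bv v.
  by apply/subsetP => e; rewrite inE in_setU1 => /h2.
by move: (H X); rewrite hX h1 eqxx hs.
Qed.

Lemma sopp_sym (x y : sign) : (x != sopp y) = (y != sopp x).
Proof. by case: x => [[]|]; case: y => [[]|]. Qed.

Lemma dist (n : nat) (C : {set svec (Eq n)})
  (U : {set vertex n} -> vertex n -> 'I_n -> bool) (v w : vertex n) :
  is_P_matroid_extension C ->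
  (forall v : vertex n, is_USO_on (unor_dims C v) v (U (max_unor_face C v))) ->
  v != w -> exists i, v i != w i /\ completed C U v i != completed C U w i.
Proof.
case=> HOM HP HU nvw.
have [sX cX] := fund_spec C v.
have [sY cY] := fund_spec C w.
have PUv : forall i, PUSO C v i = sopp (fund_circ C (Bv v) None (Some (v i, i))) by [].
have PUw : forall i, PUSO C w i = sopp (fund_circ C (Bv w) None (Some (w i, i))) by [].
move: sX cX sY cY PUv PUw.
set X := fund_circ C (Bv v) None; set Y := fund_circ C (Bv w) None.
move=> sX cX sY cY PUv PUw.
case: (eqVneq X Y) => [eXY|nXY].
  have z1 : forall i, v i != w i -> PUSO C v i = None.
    move=> i nvi; rewrite PUv; apply/eqP; rewrite sopp_None; apply/negPn/negP => h.
    rewrite eXY in h; move: (sY _ h); by rewrite mem_Bv (negbTE nvi).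
  have z2 : forall i, v i != w i -> PUSO C w i = None.
    move=> i nvi; rewrite PUw; apply/eqP; rewrite sopp_None; apply/negPn/negP => h.
    rewrite -eXY in h; move: (sX _ h); by rewrite mem_Bv (eq_sym (w i)) (negbTE nvi).
  have eI : unor_dims C v = unor_dims C w.
    apply/setP => j; rewrite !inE; case: (eqVneq (v j) (w j)) => [e|ne].
      by rewrite PUv PUw e eXY.
    by rewrite z1 // z2.
  set I := unor_dims C v.
  have dI : forall j, v j != w j -> j \in I by move=> j h; rewrite inE z1.
  have wfj : forall j, j \notin I -> w j = v j.
    move=> j hj; case: (eqVneq (v j) (w j)) => [->//|ne]; by rewrite dI in hj.
  have wf : w \in face I v by apply/faceP.
  have vf : v \in face I v by apply/faceP.
  have eF : max_unor_face C w = max_unor_face C v.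
    rewrite /max_unor_face -eI -/I; apply/setP => x; apply/faceP/faceP => h j hj.
      by rewrite h // wfj.
    by rewrite h // wfj.
  have [i [di dU]] := USO_on_inj (HU v) vf wf nvw.
  exists i; split => //.
  by rewrite /completed z1 // z2 // eF.
case: cX => [[hX hXN]|[hX0 ncv]]; case: cY => [[hY hYN]|[hY0 ncw]].
- case: (HOM) => _ Hneg _ Hel.
  have nX : X <> negv (negv Y) by rewrite negvK; apply/eqP.
  have hYn : negv Y None = Some false by rewrite negvE hYN.
  have [Z hZ [hZN hZp hZn]] := Hel X (negv Y) None hX (Hneg _ hY) nX hXN hYn.
  case: (HP) => _ _ Hns.
  have nsr := Hns _ (del_mem hZ hZN).
  have : [exists i, [&& (false,i) \in supp (restr Z), (true,i) \in supp (restr Z) &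
                       restr Z (false,i) != sopp (restr Z (true,i))]].
    apply: contraT => /existsPn H; exfalso; apply: nsr => i h1 h2; apply/eqP.
    by move: (H i); rewrite h1 h2 /= negbK.
  case/existsP => i /and3P [h1 h2 h3].
  rewrite !inE !ffunE in h1 h2 h3.
  have hZs : forall g, Z g != None -> [|| g == None, g \in Bv v | g \in Bv w].
    move=> g; case hZg: (Z g) => [s|] // _.
    have : X g = Some s \/ negv Y g = Some s.
      by case: s hZg => /[dup] hg; [move/hZp | move/hZn].
    case=> [hg|]; first by move: (sX g); rewrite hg => /(_ isT) /orP [->|->]; rewrite ?orbT.
    rewrite negvE => hg; have : Y g != None by move: hg; case: (Y g).
    by move/sY => /orP [->|->]; rewrite ?orbT.
  have vi_ne : v i != w i.
    by move: (hZs _ h1) (hZs _ h2); rewrite !mem_Bv /=; case: (v i); case: (w i).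
  have YA : Y (Some (v i, i)) = None.
    apply/eqP; apply/negPn/negP => h; move: (sY _ h); by rewrite mem_Bv (negbTE vi_ne).
  have XB : X (Some (w i, i)) = None.
    apply/eqP; apply/negPn/negP => h; move: (sX _ h); by rewrite mem_Bv (eq_sym (w i)) (negbTE vi_ne).
  have key : [/\ Z (Some (v i, i)) != None, Z (Some (w i, i)) != None &
                 Z (Some (v i, i)) != sopp (Z (Some (w i, i)))].
    move: h1 h2 h3 vi_ne; case: (v i); case: (w i) => //= h1 h2 h3 _.
      by rewrite sopp_sym in h3; split.
  case: key; case hZa: (Z (Some (v i, i))) => [s|] // _; case hZb: (Z (Some (w i, i))) => [t|] // _ hst.
  have est : s = t by move: hst; case: s {hZa}; case: t {hZb}.
  have XA : X (Some (v i, i)) = Some s.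
    case: s hZa {hst est} => hZa; [case: (hZp _ hZa) | case: (hZn _ hZa)] => //;
      by rewrite negvE YA.
  have YB : Y (Some (w i, i)) = Some (~~ s).
    have : negv Y (Some (w i, i)) = Some t.
      case: t hZb {hst est} => hZb; [case: (hZp _ hZb) | case: (hZn _ hZb)] => //;
        by rewrite XB.
    rewrite negvE -est; case: (Y _) => [[]|] //= [<-] //.
  exists i; split => //.
  by rewrite /completed PUv PUw XA YB /=; case: s {hZa hst XA YB est}.
- exfalso; apply: ncw; apply: (circ_all (v := v)) => //; by exists X.
- exfalso; apply: ncv; apply: (circ_all (v := w)) => //; by exists Y.
- by rewrite hX0 hY0 eqxx in nXY.
Qed.

Theorem mainTheorem5 (n : nat) (C : {set svec (Eq n)})
  (U : {set vertex n} -> vertex n -> 'I_n -> bool) :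
  is_P_matroid_extension C ->
  (forall v : vertex n, is_USO_on (unor_dims C v) v (U (max_unor_face C v))) ->
  is_USO (completed C U).
Proof.
move=> HC HU; apply: inj_USO => v w nvw; exact: dist.
Qed.
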